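(* Let $\mathcal{X}\subseteq\mathbb{R}^d$ be nonempty, closed and convex, let $f:\mathbb{R}^d\to\mathbb{R}$ be convex and differentiable, and assume $\mathcal{X}_\star:=\operatorname{arg\,min}_{x\in\mathcal{X}} f(x)$ is nonempty. Assume there is $G>0$ with $\|\nabla f(x)\|\le G$ for all $x\in\mathcal{X}$. Let $x_0\in\mathcal{X}$, $x_\star\in\mathcal{X}_\star$, and let $\{x_k\}_{k\ge0}$ be generated by $x_{k+1}\in\operatorname{arg\,min}_{z\in\mathcal{X}\cap\mathcal{B}(x_k,t_k)}\langle\nabla f(x_k),z\rangle$, where $t_k:=\frac{f(x_k)-f(x_\star)}{\|\nabla f(x_k)\|}$ whenever $x_k\neq x_\star$ and $t_k=0$ when $x_k=x_\star$. Then for every $K\ge1$, $$\frac1K\sum_{k=0}^{K-1}(f(x_k)-f(x_\star))^2\le\frac{G^2\|x_0-x_\star\|^2}{K},$$ and the average iterate $\hat x_K:=\frac1K\sum_{k=0}^{K-1}x_k$ satisfies $f(\hat x_K)-f(x_\star)\le\frac{G\|x_0-x_\star\|}{\sqrt K}$.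
   Context: $\|\cdot\|$ is the Euclidean norm, $\mathcal{B}(x,t):=\{y:\|y-x\|\le t\}$. *)

(* Defs.v *)
From HB Require Import structures.
From mathcomp Require Import all_boot all_order all_algebra.
From mathcomp Require Import all_classical all_reals all_analysis.
Set Implicit Arguments. Unset Strict Implicit. Unset Printing Implicit Defensive.
Import Order.TTheory GRing.Theory Num.Theory.
Import numFieldNormedType.Exports.
Local Open Scope classical_set_scope.
Local Open Scope ring_scope.

Section Defs.
Variables (R : realType) (d : nat).
Implicit Types (x y : 'rV[R]_d).

(* Euclidean inner product and norm (the library's norm on 'rV is the max norm). *)
Definition dotv x y : R := \sum_(i < d) x 0 i * y 0 i.
Definition enorm x : R := Num.sqrt (dotv x x).
Definition eball x (t : R) : set 'rV[R]_d := [set y | enorm (y - x) <= t].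

Definition convex_fun (f : 'rV[R]_d -> R) : Prop :=
  forall x y (l : R), 0 <= l <= 1 ->
    f (l *: x + (1 - l) *: y) <= l * f x + (1 - l) * f y.

Definition argmin (S : set 'rV[R]_d) (g : 'rV[R]_d -> R) : set 'rV[R]_d :=
  [set x | S x /\ forall y, S y -> g x <= g y].

Definition grad (f : 'rV[R]_d -> R) x : 'rV[R]_d :=
  \row_(i < d) ('d f x (delta_mx 0 i : 'rV[R]_d)).

(* step size t_k ; when the gradient is zero, x / 0 = 0 in MathComp *)
Definition stepsize (f : 'rV[R]_d -> R) (xs x : 'rV[R]_d) : R :=
  if x == xs then 0 else (f x - f xs) / enorm (grad f x).
End Defs.

(* Main.v *)
Require Import Defs.
From HB Require Import structures.
From mathcomp Require Import all_boot all_order all_algebra.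
From mathcomp Require Import all_classical all_reals all_analysis.
From mathcomp Require Import ring lra.
Import Order.TTheory GRing.Theory Num.Theory.
Import numFieldNormedType.Exports.
Local Open Scope classical_set_scope.
Local Open Scope ring_scope.
Section S_T1.
Set Implicit Arguments. Unset Strict Implicit.
Variables (R : realType) (d : nat).
Implicit Types (x y z : 'rV[R]_d).

Lemma dotvC x y : dotv x y = dotv y x.
Proof. by apply: eq_bigr => i _; rewrite mulrC. Qed.
Lemma dotvDr x y z : dotv x (y + z) = dotv x y + dotv x z.
Proof. by rewrite /dotv -big_split; apply: eq_bigr => i _; rewrite !mxE mulrDr. Qed.
Lemma dotvZr x y (a : R) : dotv x (a *: y) = a * dotv x y.
Proof. by rewrite /dotv mulr_sumr; apply: eq_bigr => i _; rewrite !mxE mulrCA. Qed.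
Lemma dotvNr x y : dotv x (- y) = - dotv x y.
Proof. by rewrite -scaleN1r dotvZr mulN1r. Qed.
Lemma dotvBr x y z : dotv x (y - z) = dotv x y - dotv x z.
Proof. by rewrite dotvDr dotvNr. Qed.
Lemma dotvDl x y z : dotv (y + z) x = dotv y x + dotv z x.
Proof. by rewrite dotvC dotvDr !(dotvC x). Qed.
Lemma dotvZl x y (a : R) : dotv (a *: y) x = a * dotv y x.
Proof. by rewrite dotvC dotvZr dotvC. Qed.
Lemma dotvBl x y z : dotv (y - z) x = dotv y x - dotv z x.
Proof. by rewrite dotvC dotvBr !(dotvC x). Qed.
Lemma dotv_ge0 x : 0 <= dotv x x.
Proof. by apply: sumr_ge0 => i _; rewrite -expr2 sqr_ge0. Qed.
Lemma dotv_eq0 x : dotv x x = 0 -> x = 0.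
Proof.
move=> /eqP; rewrite psumr_eq0 => [/allP H|i _]; last by rewrite -expr2 sqr_ge0.
apply/rowP => i; rewrite mxE; have := H i (mem_index_enum _).
by rewrite /= mulf_eq0 orbb => /eqP.
Qed.
Lemma enorm_sq x : enorm x ^+ 2 = dotv x x.
Proof. by rewrite sqr_sqrtr // dotv_ge0. Qed.
Lemma enorm_ge0 x : 0 <= enorm x.
Proof. exact: sqrtr_ge0. Qed.

Lemma diff_grad (f : 'rV[R]_d -> R) x v : 'd f x v = dotv (grad f x) v.
Proof.
rewrite {1}(row_sum_delta v) linear_sum /dotv; apply: eq_bigr => i _.
by rewrite linearZ /= !mxE mulrC.
Qed.
End S_T1.
Section S_T2.
Set Implicit Arguments. Unset Strict Implicit.
Variables (R : realType) (d : nat).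
Implicit Types (x y z : 'rV[R]_d).
Lemma grad_ineq (f : 'rV[R]_d -> R) x y : convex_fun f -> differentiable f x ->
  f x + dotv (grad f x) (y - x) <= f y.
Proof.
move=> cf df; rewrite -diff_grad -deriveE //.
rewrite -lerBrDl.
set g := fun h : R => h^-1 *: ((f \o shift x) (h *: (y - x)) - f x).
have dv := @diff_derivable _ _ _ f x (y - x) df.
have H : g @ 0^'+ --> 'D_(y - x) f x.
  move=> A /dv /nbhs_ballP [_ /posnumP[e] xe_A].
  by exists e%:num => //= h xe_y /gt_eqF/negbT/xe_A; exact.
apply: (cvgr_to_le H).
exists 1 => //= h; rewrite /ball /= sub0r normrN => h1 h0.
rewrite /g /= [_ *: _]/(_ * _) ler_pdivrMl //.
have h1' : h <= 1 by move: h1; rewrite ger0_norm ?(ltW h0) // => /ltW.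
have := cf y x h; rewrite ltW //= h1' => /(_ isT).
rewrite scalerBr [X in f X](_ : _ = h *: y - h *: x + x); last first.
  by rewrite scalerBl scale1r [x - _]addrC addrA.
lra.
Qed.
End S_T2.
Section S_T3.
Set Implicit Arguments. Unset Strict Implicit.
Variables (R : realType) (d : nat).
Implicit Types (x y z : 'rV[R]_d).
Lemma step_geom (X : set 'rV[R]_d) g xk z xs (t : R) :
  convex_set X -> X xs -> X z -> 0 <= t -> (enorm g = 0 -> t = 0) ->
  dotv g (xs - xk) <= - (t * enorm g) ->
  dotv (z - xk) (z - xk) <= t ^+ 2 ->
  (forall w, X w -> dotv (w - xk) (w - xk) <= t ^+ 2 -> dotv g z <= dotv g w) ->
  t ^+ 2 <= dotv (z - xk) (xs - xk).
Proof.
move=> cX Xs Xz t0 n0 hgv hu opt.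
set u := z - xk; set v := xs - xk; set c := dotv u v.
have hu2 : dotv u u <= t ^+ 2 := hu.
have hgv2 : dotv g v <= - (t * enorm g) := hgv.
have [//|ct] := leP (t ^+ 2) c.
exfalso.
have [t00|tpos] := eqVneq t 0.
  move: hu; rewrite t00 expr0n /= => hu.
  have u0 : u = 0 by apply: dotv_eq0; apply/le_anti; rewrite hu dotv_ge0.
  by move: ct; rewrite /c u0 /dotv big1 ?t00 ?expr0n ?ltxx // => i _; rewrite mxE mul0r.
have tp : 0 < t by rewrite lt_neqAle eq_sym tpos t0.
set D2 := dotv v v; set e := t ^+ 2 - c.
have e0 : 0 < e by rewrite subr_gt0.
have D0 : 0 <= D2 := dotv_ge0 v.
set s := e / (e + D2).
have eD : 0 < e + D2 by rewrite ltr_wpDr.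
have s0 : 0 <= s by rewrite divr_ge0 // ltW.
have s1 : s <= 1 by rewrite ler_pdivrMr // mul1r lerDl.
have spos : 0 < s by rewrite divr_gt0.
have sE : s * (e + D2) = e by rewrite /s mulfVK // gt_eqF.
pose w := s *: xs + (1 - s) *: z.
have Xw : X w.
  have := cX xs z (Itv01 s0 s1); rewrite !inE => /(_ Xs Xz).
  done.
have wE : w - xk = s *: v + (1 - s) *: u.
  by apply/rowP => i; rewrite /w /u /v !mxE; ring.
have uu := hu; have cs : dotv u v = dotv v u := dotvC u v.
have hw : dotv (w - xk) (w - xk) <= t ^+ 2.
  rewrite wE !dotvDl !dotvDr !dotvZl !dotvZr -/D2 -cs -/c.
  have h1 : (1 - s) * ((1 - s) * dotv u u) <= (1 - s) * ((1 - s) * t ^+ 2).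
    by rewrite ler_wpM2l ?subr_ge0 // ler_wpM2l ?subr_ge0.
  have : e = t ^+ 2 - c by [].
  nra.
have := opt w Xw hw.
rewrite /w dotvDr !dotvZr => hopt.
have gzv : dotv g z <= dotv g xs by nra.
have gu : dotv g u <= - (t * enorm g).
  by move: hgv; rewrite /u /v !dotvBr; lra.
clearbody u v.
have [n00|npos] := eqVneq (enorm g) 0.
  by move: tpos; rewrite n0 ?eqxx.
have np : 0 < enorm g by rewrite lt_neqAle eq_sym npos enorm_ge0.
pose q := t / enorm g.
have qn : q * enorm g = t by rewrite /q mulfVK.
have gg : dotv g g = enorm g ^+ 2 by rewrite enorm_sq.
have hz : dotv (u + q *: g) (u + q *: g) <= 0.
  rewrite !dotvDl !dotvDr !dotvZl !dotvZr gg (dotvC u g).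
  have : dotv g u * q <= - (t * enorm g) * q by rewrite ler_wpM2r // divr_ge0 // ltW.
  have e1 : q * (q * enorm g ^+ 2) = t ^+ 2 by rewrite -qn; ring.
  have e2 : - (t * enorm g) * q = - t ^+ 2 by rewrite -qn; ring.
  rewrite e1 e2 => h3; rewrite mulrC in h3; lra.
have uq : u = - (q *: g).
  apply/eqP; rewrite -subr_eq0 opprK; apply/eqP/dotv_eq0.
  by apply/le_anti; rewrite hz dotv_ge0.
move: ct; rewrite /c uq dotvC dotvNr dotvZr.
have : dotv v g * q <= - (t * enorm g) * q.
  by apply: ler_wpM2r; [rewrite divr_ge0 ?ltW | rewrite dotvC].
nra.
Qed.
End S_T3.
Section S_T4.
Set Implicit Arguments. Unset Strict Implicit.
Variables (R : realType) (d : nat).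
Implicit Types (x y z : 'rV[R]_d).
Lemma jensen (f : 'rV[R]_d -> R) (y : nat -> 'rV[R]_d) n : convex_fun f ->
  f ((n.+1%:R)^-1 *: \sum_(k < n.+1) y k) <= (n.+1%:R)^-1 * \sum_(k < n.+1) f (y k).
Proof.
move=> cf; elim: n => [|n IH].
  by rewrite !big_ord1 invr1 scale1r mul1r.
rewrite big_ord_recr [X in _ <= _ * X]big_ord_recr /=.
set A := \sum_(k < n.+1) y k; set B := \sum_(k < n.+1) f (y k).
set N : R := n.+1%:R.
have Np : 0 < N by rewrite ltr0n.
have N2 : n.+2%:R = N + 1 by rewrite -addn1 natrD.
rewrite N2; move: IH; rewrite -/N -/A -/B => IH; clearbody N.
set l := N / (N + 1).
have l0 : 0 <= l by rewrite divr_ge0 // ?addr_ge0 // ltW.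
have l1 : l <= 1 by rewrite ler_pdivrMr ?mul1r ?lerDl // addr_gt0.
have N1 : N + 1 != 0 by rewrite gt_eqF // addr_gt0.
have NN : N != 0 by rewrite gt_eqF.
have -> : (N + 1)^-1 *: (A + y n.+1) = l *: (N^-1 *: A) + (1 - l) *: y n.+1.
  rewrite scalerA scalerDr; congr (_ + _); congr (_ *: _); rewrite /l; field; rewrite ?NN ?N1 //.
have hc : f (l *: (N^-1 *: A) + (1 - l) *: y n.+1) <= l * f (N^-1 *: A) + (1 - l) * f (y n.+1) by apply: cf; rewrite l0 l1.
have h : l * f (N^-1 *: A) <= l * (N^-1 * B) by apply: ler_wpM2l.
have -> : (N + 1)^-1 * (B + f (y n.+1)) = l * (N^-1 * B) + (1 - l) * f (y n.+1).
  rewrite /l; field; rewrite ?NN ?N1 //.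
lra.
Qed.

Lemma sum_sq_le n (a : 'I_n -> R) :
  (\sum_(k < n) a k) ^+ 2 <= n%:R * \sum_(k < n) a k ^+ 2.
Proof.
case: n a => [|n] a; first by rewrite !big_ord0 expr0n mul0r.
set S1 := \sum_(k < n.+1) a k; set S := \sum_(k < n.+1) a k ^+ 2.
set N : R := n.+1%:R.
have Np : 0 < N by rewrite ltr0n.
set m := S1 / N.
have h : 0 <= \sum_(k < n.+1) (a k - m) ^+ 2 by apply: sumr_ge0 => k _; rewrite sqr_ge0.
have e : \sum_(k < n.+1) (a k - m) ^+ 2 = S - 2 * m * S1 + N * m ^+ 2.
  rewrite (eq_bigr (fun k => a k ^+ 2 - 2 * m * a k + m ^+ 2)); last by move=> k _; ring.
  rewrite big_split /= sumrB /= -mulr_sumr sumr_const card_ord -mulr_natl.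
  rewrite /S /S1 /N; ring.
rewrite e in h.
have mN : m * N = S1 by rewrite /m mulfVK // gt_eqF.
nra.
Qed.
End S_T4.
Section S_T5.
Set Implicit Arguments. Unset Strict Implicit.
Variables (R : realType) (d : nat).
Implicit Types (x y z : 'rV[R]_d).
Lemma dot_sq (a b : 'rV[R]_d) : dotv (a - b) (a - b) = dotv a a - 2 * dotv a b + dotv b b.
Proof. rewrite dotvBl !dotvBr (dotvC b a); ring. Qed.

Lemma dot_expand (u v w : 'rV[R]_d) : dotv (u - w) (u - w) =
  dotv (u - v) (u - v) - 2 * dotv (u - v) (w - v) + dotv (w - v) (w - v).
Proof.
have -> : u - w = (u - v) - (w - v) by apply/rowP => i; rewrite !mxE; ring.
exact: dot_sq.
Qed.

Lemma dot_swap (u v : 'rV[R]_d) : dotv (u - v) (u - v) = dotv (v - u) (v - u).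
Proof.
have -> : u - v = (-1) *: (v - u) by apply/rowP => i; rewrite !mxE; ring.
by rewrite dotvZl dotvZr; ring.
Qed.

Lemma one_step (X : set 'rV[R]_d) f G xs xk z :
  convex_set X -> convex_fun f -> (forall y, differentiable f y) ->
  (forall y, X y -> enorm (grad f y) <= G) -> argmin X f xs -> X xk ->
  argmin (X `&` eball xk (stepsize f xs xk)) (fun w => dotv (grad f xk) w) z ->
  (f xk - f xs) ^+ 2 <= G ^+ 2 * dotv (xk - xs) (xk - xs) - G ^+ 2 * dotv (z - xs) (z - xs).
Proof.
move=> cX cf dif hG [Xs smin] Xk [[Xz bz] opt].
have fge : f xs <= f xk := smin xk Xk.
have gi := @grad_ineq _ _ f xk xs cf (dif xk).
have nG := hG xk Xk.
set g := grad f xk in gi nG bz opt *.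
set n := enorm g in nG *.
have n0 : 0 <= n := enorm_ge0 g.
have g0 : n = 0 -> g = 0.
  move=> nz; apply: dotv_eq0; rewrite -enorm_sq -/n nz; by rewrite expr0n.
have dg0 : n = 0 -> dotv g (xs - xk) = 0.
  move=> /g0 ->; by rewrite /dotv big1 // => i _; rewrite mxE mul0r.
set t := stepsize f xs xk in bz opt *.
have [tn [t0 tn0]] : t * n = f xk - f xs /\ 0 <= t /\ (n = 0 -> t = 0).
  rewrite /t /stepsize; case: eqP => [->|ne]; first by rewrite mul0r subrr.
  rewrite -/g -/n.
  have [nz|npos] := eqVneq n 0.
    rewrite nz invr0 !mulr0; split => //.
    by move: gi; rewrite dg0 // addr0 => h; apply/eqP; rewrite eq_sym subr_eq0 eq_le h fge.
  split; first by rewrite mulfVK.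
  split; last by move=> nz; move: npos; rewrite nz eqxx.
  by rewrite divr_ge0 // subr_ge0.
have hgv : dotv g (xs - xk) <= - (t * n) by rewrite tn; lra.
have hu : dotv (z - xk) (z - xk) <= t ^+ 2.
  rewrite -enorm_sq; have := enorm_ge0 (z - xk); move: bz; rewrite /eball /=; nra.
have key := step_geom cX Xs Xz t0 tn0 hgv hu.
have {key} key : t ^+ 2 <= dotv (z - xk) (xs - xk).
  apply: key => w Xw hw; apply: opt; split => //.
  rewrite /eball /= /enorm -(ger0_norm t0) -sqrtr_sqr; exact: ler_wsqrtr.
have e1 : z - xs = (z - xk) - (xs - xk) by apply/rowP => i; rewrite !mxE; ring.
have e2 : xk - xs = - (xs - xk) by rewrite opprB.
have E1 : dotv (z - xs) (z - xs) = dotv (z - xk) (z - xk) - 2 * dotv (z - xk) (xs - xk) + dotv (xs - xk) (xs - xk).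
  exact: dot_expand.
have E2 : dotv (xk - xs) (xk - xs) = dotv (xs - xk) (xs - xk).
  exact: dot_swap.
rewrite E1 E2.
move: key hu; set a := dotv (z - xk) (z - xk); set b := dotv (z - xk) (xs - xk);
  set c := dotv (xs - xk) (xs - xk) => key hu.
have h1 : (f xk - f xs) ^+ 2 = t ^+ 2 * n ^+ 2 by rewrite -tn; ring.
have h2 : n ^+ 2 <= G ^+ 2 by rewrite ler_pXn2r // ?nnegrE //; apply: le_trans nG.
have h3 : t ^+ 2 * n ^+ 2 <= t ^+ 2 * G ^+ 2 by apply: ler_wpM2l => //; exact: sqr_ge0.
have h4 : t ^+ 2 * G ^+ 2 <= (b + b - a) * G ^+ 2.
  apply: ler_wpM2r; [exact: sqr_ge0 | lra].
rewrite h1; apply: le_trans h3 _; apply: le_trans h4 _.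
rewrite le_eqVlt; apply/orP; left; apply/eqP; ring.
Qed.
End S_T5.
Unset Implicit Arguments.
Theorem theorem4 (R : realType) (d : nat) (X : set 'rV[R]_d)
  (f : 'rV[R]_d -> R) (G : R) (xs : 'rV[R]_d) (x : nat -> 'rV[R]_d) :
  X !=set0 -> closed X -> convex_set X ->
  convex_fun f -> (forall y, differentiable f y) ->
  argmin X f !=set0 ->
  0 < G -> (forall y, X y -> enorm (grad f y) <= G) ->
  X (x 0%N) -> argmin X f xs ->
  (forall k, argmin (X `&` eball (x k) (stepsize f xs (x k)))
                    (fun z => dotv (grad f (x k)) z) (x k.+1)) ->
  forall K : nat, (1 <= K)%N ->
    (K%:R)^-1 * \sum_(k < K) (f (x k) - f xs) ^+ 2
      <= G ^+ 2 * enorm (x 0%N - xs) ^+ 2 / K%:R /\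
    f ((K%:R)^-1 *: \sum_(k < K) x k) - f xs
      <= G * enorm (x 0%N - xs) / Num.sqrt (K%:R).
Proof.
move=> _ _ cX cf dif _ G0 hG Xx0 hxs hstep K K1.
have Xk : forall k, X (x k) by elim => // k _; have [[]] := hstep k.
pose D k := dotv (x k - xs) (x k - xs).
have hs : forall k, (f (x k) - f xs) ^+ 2 <= G ^+ 2 * D k - G ^+ 2 * D k.+1.
  move=> k; exact: (one_step cX cf dif hG hxs (Xk k) (hstep k)).
have sumS : forall n, \sum_(k < n) (f (x k) - f xs) ^+ 2 <= G ^+ 2 * D 0%N - G ^+ 2 * D n.
  elim => [|n IH]; first by rewrite big_ord0 subrr.
  rewrite big_ord_recr /=; have := hs n; lra.
set S := \sum_(k < K) (f (x k) - f xs) ^+ 2.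
set E := enorm (x 0%N - xs).
have SE : S <= G ^+ 2 * E ^+ 2.
  have := sumS K; rewrite -/S /E enorm_sq -/(D 0%N).
  have : 0 <= G ^+ 2 * D K by rewrite mulr_ge0 ?sqr_ge0 ?dotv_ge0.
  lra.
have Kp : 0 < K%:R :> R by rewrite ltr0n.
split.
  rewrite mulrC; apply: ler_wpM2r => //; by rewrite invr_ge0 ltW.
case: K K1 Kp @S SE => [//|n] _ Kp S SE.
apply: le_trans (lerD (jensen x n cf) (lexx (- f xs))) _.
set S1 := \sum_(k < n.+1) (f (x k) - f xs).
have S1E : \sum_(k < n.+1) f (x k) = S1 + n.+1%:R * f xs.
  by rewrite /S1 sumrB sumr_const card_ord mulr_natl subrK.
rewrite S1E mulrDr mulrA mulVf ?gt_eqF // mul1r addrK.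
have S1sq : S1 ^+ 2 <= n.+1%:R * S := sum_sq_le (fun k : 'I_n.+1 => f (x k) - f xs).
set N : R := n.+1%:R in Kp S1sq *.
set sK := Num.sqrt N.
have sKp : 0 < sK by rewrite sqrtr_gt0.
have sK2 : sK ^+ 2 = N by rewrite sqr_sqrtr // ltW.
have E0 : 0 <= E by exact: enorm_ge0.
have [S1n|S1p] := lerP S1 0.
  apply: le_trans (_ : 0 <= _).
    by rewrite mulr_ge0_le0 // invr_ge0 ltW.
  by rewrite divr_ge0 // ?mulr_ge0 // ltW.
have h1 : S1 ^+ 2 <= (sK * G * E) ^+ 2.
  apply: le_trans S1sq _; rewrite !exprMn sK2 -mulrA; apply: ler_wpM2l; [exact: ltW | lra].
have h2 : S1 <= sK * G * E.
  have M0 : 0 <= sK * G * E by apply: mulr_ge0 => //; apply: mulr_ge0; apply: ltW.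
  by move: h1; rewrite ler_pXn2r // nnegrE ?ltW.
have -> : G * E / sK = N^-1 * (sK * G * E).
  by rewrite -sK2; field; rewrite gt_eqF.
by apply: ler_wpM2l => //; rewrite invr_ge0 ltW.
Qed.
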